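(* The group $\mathsf{Aut}$ of all affine bijections $\mathcal{G}_N\to\mathcal{G}_N$ is finite, and every $\sigma\in\mathsf{Aut}$ is completely determined by its restriction to $\mathcal{I}$.
   Context: $\mathcal{G}_N$ is the set of real symmetric positive semi-definite $N\times N$ matrices with unit diagonal; $\mathcal{I}$ is the set of Ising matrices $\mathbf{s}\mathbf{s}^\top$, $\mathbf{s}\in\{\pm1\}^N$. *)

(* Defs.v *)
From HB Require Import structures.
From mathcomp Require Import all_boot all_order all_algebra.
From mathcomp Require Import reals.
Set Implicit Arguments. Unset Strict Implicit. Unset Printing Implicit Defensive.
Import Order.TTheory GRing.Theory Num.Theory.
Local Open Scope ring_scope.

Definition psd (R : realType) (N : nat) (A : 'M[R]_N) : Prop :=
  forall x : 'cV[R]_N, 0 <= (x^T *m A *m x) 0 0.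

Definition elliptope (R : realType) (N : nat) (A : 'M[R]_N) : Prop :=
  A^T = A /\ psd A /\ (forall i, A i i = 1).

Definition ising (R : realType) (N : nat) (A : 'M[R]_N) : Prop :=
  exists s : 'cV[R]_N, (forall i, s i 0 = 1 \/ s i 0 = -1) /\ A = s *m s^T.

Definition affine_aut (R : realType) (N : nat) (f : 'M[R]_N -> 'M[R]_N) : Prop :=
  (forall A, elliptope A -> elliptope (f A)) /\
  (forall A B, elliptope A -> elliptope B -> f A = f B -> A = B) /\
  (forall B, elliptope B -> exists2 A, elliptope A & f A = B) /\
  (forall A B (t : R), elliptope A -> elliptope B -> 0 <= t -> t <= 1 ->
     f (t *: A + (1 - t) *: B) = t *: f A + (1 - t) *: f B).

(* Main.v *)
Set Warnings "-notation-overridden,-ambiguous-paths,-notation-incompatible-prefix".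
Require Import Defs.
From HB Require Import structures.
From mathcomp Require Import all_boot all_order all_algebra.
From mathcomp Require Import reals.
Import Order.TTheory GRing.Theory Num.Theory.
Local Open Scope ring_scope.
From mathcomp Require Import lra ring.
From Stdlib Require Import ClassicalEpsilon Classical.
Set Implicit Arguments. Unset Strict Implicit.

Lemma final_real (R : realType) (r c LU LV LE : R) : r ^+ 2 < 1 -> 0 < c ->
  (forall x y, 2 * x + 2 * y * r + (x * x + 2 * x * y * r + y * y) = 0 ->
     `|x * r + y| <= c * (x * LU + y * LV + (x * x + 2 * x * y * r + y * y) * LE)) -> False.
Proof.
move=> hr c0 H.
set K := 2 * LE - LU.
set A := `|K| + 1.
have A0 : 0 < A by rewrite /A ltr_pwDr // normr_ge0.
have d0 : 0 < 1 - r ^+ 2 by rewrite subr_gt0.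
set e := (1 - r ^+ 2) / (c * A).
have e0 : 0 < e by rewrite /e divr_gt0 // mulr_gt0.
have cA : c * e * A = 1 - r ^+ 2.
  by rewrite /e; field; rewrite !gt_eqF.
have D0 : 0 < e * e + 1 - r ^+ 2 by have := mulr_ge0 (ltW e0) (ltW e0); lra.
set b := 2 * e / (e * e + 1 - r ^+ 2).
have b0 : 0 < b by rewrite /b divr_gt0 // mulr_gt0.
have hb : b * (e * e + 1 - r ^+ 2) = 2 * e by rewrite /b; field; rewrite gt_eqF.
set x1 := - ((e - r) * b). set y1 := - b.
have h1 : x1 * x1 + 2 * x1 * y1 * r + y1 * y1 = 2 * e * b.
  have -> : x1 * x1 + 2 * x1 * y1 * r + y1 * y1 = b * (b * (e * e + 1 - r ^+ 2)).
    by rewrite /x1 /y1; ring.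
  by rewrite hb; ring.
have I1 := H x1 y1.
rewrite h1 in I1.
have c1 : 2 * x1 + 2 * y1 * r + 2 * e * b = 0 by rewrite /x1 /y1; ring.
have {}I1 := I1 c1.
have L1 : b * (1 - r ^+ 2 + e * r) <= `|x1 * r + y1|.
  have -> : x1 * r + y1 = - (b * (1 - r ^+ 2 + e * r)) by rewrite /x1 /y1; ring.
  by rewrite normrN ler_norm.
set x2 := (- e - r) * b. set y2 := b.
have h2 : x2 * x2 + 2 * x2 * y2 * r + y2 * y2 = 2 * e * b.
  have -> : x2 * x2 + 2 * x2 * y2 * r + y2 * y2 = b * (b * (e * e + 1 - r ^+ 2)).
    by rewrite /x2 /y2; ring.
  by rewrite hb; ring.
have I2 := H x2 y2.
rewrite h2 in I2.
have c2 : 2 * x2 + 2 * y2 * r + 2 * e * b = 0 by rewrite /x2 /y2; ring.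
have {}I2 := I2 c2.
have L2 : b * (1 - r ^+ 2 - e * r) <= `|x2 * r + y2|.
  have -> : x2 * r + y2 = b * (1 - r ^+ 2 - e * r) by rewrite /x2 /y2; ring.
  exact: ler_norm.
have S : b * (2 * (1 - r ^+ 2)) <= b * (2 * (c * e * K)).
  have E1 : b * (2 * (1 - r ^+ 2)) = b * (1 - r ^+ 2 + e * r) + b * (1 - r ^+ 2 - e * r) by ring.
  have E2 : b * (2 * (c * e * K)) = c * (x1 * LU + y1 * LV + 2 * e * b * LE)
                                  + c * (x2 * LU + y2 * LV + 2 * e * b * LE).
    by rewrite /K /x1 /y1 /x2 /y2; ring.
  rewrite E1 E2; apply: lerD; [exact: le_trans L1 I1 | exact: le_trans L2 I2].
rewrite ler_pM2l // in S.
have F2 : c * e * K <= c * e * `|K|.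
  by rewrite ler_wpM2l ?ler_norm // mulr_ge0 // ltW.
have F4 : 0 < c * e by rewrite mulr_gt0.
move: cA; rewrite /A mulrDr mulr1 => cA.
lra.
Qed.

Section Ell.
Variable R : realType.
Variable N : nat.
Local Notation M := 'M[R]_N.
Local Notation ell := (@elliptope R N).

Lemma mxDE m n (A B : 'M[R]_(m,n)) i j : (A + B) i j = A i j + B i j.
Proof. by rewrite mxE. Qed.
Lemma mxZE m n c (A : 'M[R]_(m,n)) i j : (c *: A) i j = c * A i j.
Proof. by rewrite mxE. Qed.
Lemma mxNE m n (A : 'M[R]_(m,n)) i j : (- A) i j = - A i j.
Proof. by rewrite mxE. Qed.
Lemma mxBE m n (A B : 'M[R]_(m,n)) i j : (A - B) i j = A i j - B i j.
Proof. by rewrite mxDE mxNE. Qed.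

Definition ev (k : 'I_N) : 'cV[R]_N := delta_mx k 0.
Definition bil (A : M) (x y : 'cV[R]_N) : R := (x^T *m A *m y) 0 0.

Lemma bil_ev A a b : bil A (ev a) (ev b) = A a b.
Proof.
rewrite /bil /ev trmx_delta -rowE -colE !mxE //.
Qed.

Lemma bilDl A x y z : bil A (x + y) z = bil A x z + bil A y z.
Proof. by rewrite /bil linearD /= !mulmxDl mxDE. Qed.
Lemma bilDr A x y z : bil A z (x + y) = bil A z x + bil A z y.
Proof. by rewrite /bil !mulmxDr mxDE. Qed.
Lemma bilZl A c x z : bil A (c *: x) z = c * bil A x z.
Proof. by rewrite /bil linearZ /= -!scalemxAl mxZE. Qed.
Lemma bilZr A c x z : bil A z (c *: x) = c * bil A z x.
Proof. by rewrite /bil -!scalemxAr mxZE. Qed.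
Lemma bilNl A x z : bil A (- x) z = - bil A x z.
Proof. by rewrite -scaleN1r bilZl mulN1r. Qed.
Lemma bilNr A x z : bil A z (- x) = - bil A z x.
Proof. by rewrite -scaleN1r bilZr mulN1r. Qed.

Lemma ell_sym A : ell A -> forall i j, A i j = A j i.
Proof. by case=> hs _ i j; rewrite -{1}hs mxE. Qed.

Lemma ell_bound A k l (s : R) : ell A -> s ^+ 2 = 1 -> s * A k l <= 1.
Proof.
move=> hA hs; have [hsym [hpsd hd]] := hA.
have := hpsd (ev k - s *: ev l).
rewrite -/(bil A _ _) !(bilDl, bilDr, bilNl, bilNr, bilZl, bilZr) !bil_ev !hd.
rewrite (ell_sym hA l k).
move=> h; nra.
Qed.

Lemma ell_conv A B t : ell A -> ell B -> 0 <= t -> t <= 1 ->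
  ell (t *: A + (1 - t) *: B).
Proof.
move=> [sA [pA dA]] [sB [pB dB]] t0 t1; split; [|split].
- by rewrite linearD !linearZ /= sA sB.
- move=> x; rewrite mulmxDr mulmxDl -!scalemxAr -!scalemxAl mxDE mxZE [X in _ + X]mxZE.
  have := pA x; have := pB x; nra.
- by move=> i; rewrite mxDE !mxZE dA dB; lra.
Qed.

Definition affon (V : lmodType R) (phi : M -> V) :=
  forall A B t, ell A -> ell B -> 0 <= t -> t <= 1 ->
     phi (t *: A + (1 - t) *: B) = t *: phi A + (1 - t) *: phi B.

Lemma sum0_vec (T : Type) (V : lmodType R) (w : T -> R) (v : T -> V) r :
  (forall x, 0 <= w x) -> \sum_(x <- r) w x = 0 -> \sum_(x <- r) w x *: v x = 0.
Proof.
move=> hw; elim: r => [|x r IH]; first by move=> _; rewrite big_nil.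
rewrite !big_cons => h.
have h0 : 0 <= \sum_(y <- r) w y by apply: sumr_ge0.
have hx := hw x.
have e1 : w x = 0 by lra.
have e2 : \sum_(y <- r) w y = 0 by lra.
by rewrite e1 scale0r add0r IH.
Qed.

Lemma conv_seq (T : Type) (V : lmodType R) (phi : M -> V) (p : T -> M) :
  affon phi -> (forall x, ell (p x)) -> forall r (w : T -> R), (forall x, 0 <= w x) ->
  \sum_(x <- r) w x = 1 ->
  ell (\sum_(x <- r) w x *: p x) /\
  phi (\sum_(x <- r) w x *: p x) = \sum_(x <- r) w x *: phi (p x).
Proof.
move=> hphi hp; elim=> [|x r IH] w hw; first by rewrite big_nil => /eqP; rewrite eq_sym oner_eq0.
rewrite !big_cons => hs.
set s := \sum_(y <- r) w y in hs.
have s0 : 0 <= s by apply: sumr_ge0.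
have [sz|spos] := eqVneq s 0.
  rewrite !sum0_vec // !addr0.
  have -> : w x = 1 by lra.
  by rewrite !scale1r.
have sp : 0 < s by rewrite lt_def spos s0.
pose w' y := w y / s.
have hw' : forall y, 0 <= w' y by move=> y; rewrite /w' divr_ge0.
have hs' : \sum_(y <- r) w' y = 1.
  by rewrite /w' -mulr_suml divff.
have [IH1 IH2] := IH w' hw' hs'.
have E : forall (U : lmodType R) (u : T -> U),
   \sum_(y <- r) w y *: u y = s *: \sum_(y <- r) w' y *: u y.
  move=> U u; rewrite scaler_sumr; apply: eq_bigr => y _.
  by rewrite scalerA /w' mulrCA divff ?mulr1.
have ws : s = 1 - w x by lra.
rewrite (E _ p) (E _ (fun y => phi (p y))) ws -IH2.
have wx0 := hw x. have wx1 : w x <= 1 by lra.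
split; first by apply: ell_conv.
by apply: hphi.
Qed.


Definition sg (k m : 'I_N) : R := if m == k then -1 else 1.
Definition Mv (v : 'I_N -> R) : M := \matrix_(m, n) (v m * v n).
Definition SK k := Mv (sg k).
Definition SKL k l := Mv (fun m => sg k m * sg l m).
Definition JJ := Mv (fun _ => 1).

Lemma ising_ell A : ising A -> ell A.
Proof.
move=> [s [hs ->]]; split; [|split].
- by rewrite trmx_mul trmxK.
- move=> x; rewrite !mulmxA -(mulmxA (x^T *m s)).
  have -> : x^T *m s = (s^T *m x)^T by rewrite trmx_mul trmxK.
  rewrite !mxE big_ord1 mxE; exact: sqr_ge0.
- by move=> i; rewrite !mxE big_ord1 mxE; case: (hs i) => ->; rewrite ?mulr1 ?mulrNN ?mulr1.
Qed.

Lemma ising_Mv v : (forall m, v m = 1 \/ v m = -1) -> ising (Mv v).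
Proof.
move=> hv; exists (\col_m v m); split; first by move=> i; rewrite mxE.
by apply/matrixP => m n; rewrite !mxE big_ord1 !mxE.
Qed.

Lemma sg_pm k m : sg k m = 1 \/ sg k m = -1.
Proof. by rewrite /sg; case: (m == k); [right|left]. Qed.

Lemma ising_SK k : ising (SK k). Proof. exact: ising_Mv (sg_pm k). Qed.
Lemma ising_SKL k l : ising (SKL k l).
Proof.
apply: ising_Mv => m; case: (sg_pm k m) => ->; case: (sg_pm l m) => ->;
 rewrite ?mulr1 ?mulrNN ?mulr1 ?mulN1r ?mulrN1; by [left|right].
Qed.
Lemma ising_JJ : ising JJ. Proof. by apply: ising_Mv => m; left. Qed.

Lemma sum_delta (F : 'I_N -> R) m : \sum_k (k == m)%:R * F k = F m.
Proof.
rewrite (bigD1 m) //= eqxx mul1r big1 ?addr0 // => k /negbTE ->; by rewrite mul0r.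
Qed.

Lemma sum_delta2 (F : 'I_N -> R) m n :
  \sum_k ((k == m)%:R + (k == n)%:R) * F k = F m + F n.
Proof. by rewrite -sum_delta -(sum_delta F n) -big_split; apply: eq_bigr => k _; rewrite mulrDl. Qed.

Definition cc (X : M) (p : 'I_N * 'I_N) : R := (1 - X p.1 p.2) / 4.
Definition qq (p : 'I_N * 'I_N) : M := 2^-1 *: (JJ + SKL p.1 p.2).
Definition rr (p : 'I_N * 'I_N) : M := 2^-1 *: (SK p.1 + SK p.2).

Lemma one_minus_a k m n :
  1 - sg k m * sg k n = if m == n then 0 else 2 * ((k == m)%:R + (k == n)%:R).
Proof.
rewrite /sg; case: (eqVneq m n) => [->|hmn].
  by case: (n == k); rewrite ?mulrNN mulr1 subrr.
rewrite (eq_sym k m) (eq_sym k n).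
case: (eqVneq m k) => [hmk|hmk]; case: (eqVneq n k) => [hnk|hnk] /=.
- by move: hmn; rewrite hmk hnk eqxx.
- lra.
- lra.
- lra.
Qed.

Lemma key_sum X m n : ell X ->
  \sum_p cc X p * ((1 - sg p.1 m * sg p.1 n) * (1 - sg p.2 m * sg p.2 n)) = 2 * (1 - X m n).
Proof.
move=> hX; have [_ [_ hd]] := hX.
under eq_bigr => p _ do rewrite !one_minus_a.
case: (eqVneq m n) => [->|hmn].
  under eq_bigr do rewrite mulr0 mulr0.
  by rewrite big1_eq hd subrr mulr0.
have -> : \sum_p cc X p * (2 * ((p.1 == m)%:R + (p.1 == n)%:R) * (2 * ((p.2 == m)%:R + (p.2 == n)%:R)))
  = \sum_k \sum_l cc X (k, l) * (2 * ((k == m)%:R + (k == n)%:R) * (2 * ((l == m)%:R + (l == n)%:R))).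
  by rewrite pair_bigA; apply: eq_bigr => -[k l].
have E : forall k l, cc X (k, l) * (2 * ((k == m)%:R + (k == n)%:R) * (2 * ((l == m)%:R + (l == n)%:R)))
   = 4 * (((k == m)%:R + (k == n)%:R) * (((l == m)%:R + (l == n)%:R) * cc X (k, l))).
  by move=> k l; ring.
under eq_bigr => k _ do under eq_bigr => l _ do rewrite E.
under eq_bigr => k _ do rewrite -mulr_sumr -mulr_sumr sum_delta2.
rewrite -mulr_sumr sum_delta2 /cc /= !hd (ell_sym hX n m); lra.
Qed.

Lemma ident X : ell X -> X + \sum_p cc X p *: qq p = JJ + \sum_p cc X p *: rr p.
Proof.
move=> hX; apply/matrixP => m n.
rewrite !mxDE !summxE.
under eq_bigr => p _ do rewrite mxZE /qq mxZE mxDE !mxE.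
under [X in _ = _ + X]eq_bigr => p _ do rewrite mxZE /rr mxZE mxDE !mxE.
have := key_sum m n hX.
have -> : \sum_p cc X p * ((1 - sg p.1 m * sg p.1 n) * (1 - sg p.2 m * sg p.2 n)) =
   2 * (\sum_p cc X p * (2^-1 * (1 + sg p.1 m * sg p.2 m * (sg p.1 n * sg p.2 n))))
   - 2 * \sum_p cc X p * (2^-1 * (sg p.1 m * sg p.1 n + sg p.2 m * sg p.2 n)).
  by rewrite !mulr_sumr -sumrB; apply: eq_bigr => p _; field.
rewrite /JJ mxE !mul1r.
lra.
Qed.


Lemma half_conv (A B : M) : 2^-1 *: (A + B) = 2^-1 *: A + (1 - 2^-1) *: B.
Proof. have -> : (1 - 2^-1 : R) = 2^-1 by field. by rewrite scalerDr. Qed.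

Lemma half_ell A B : ell A -> ell B -> ell (2^-1 *: (A + B)).
Proof.
move=> hA hB; rewrite half_conv; apply: ell_conv => //.
by rewrite invr_ge0. by rewrite invf_le1 // ler1n.
Qed.

Lemma half_aff (V : lmodType R) (phi : M -> V) A B : affon phi -> ell A -> ell B ->
  phi (2^-1 *: (A + B)) = 2^-1 *: (phi A + phi B).
Proof.
move=> hphi hA hB; rewrite half_conv hphi //.
- have -> : (1 - 2^-1 : R) = 2^-1 by field. by rewrite scalerDr.
- by rewrite invr_ge0.
- by rewrite invf_le1 // ler1n.
Qed.

Lemma ell_JJ : ell JJ. Proof. exact: ising_ell ising_JJ. Qed.
Lemma ell_SK k : ell (SK k). Proof. exact: ising_ell (ising_SK k). Qed.
Lemma ell_SKL k l : ell (SKL k l). Proof. exact: ising_ell (ising_SKL k l). Qed.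
Lemma ell_qq p : ell (qq p). Proof. exact: half_ell ell_JJ (ell_SKL _ _). Qed.
Lemma ell_rr p : ell (rr p). Proof. exact: half_ell (ell_SK _) (ell_SK _). Qed.

Lemma cc_ge0 X p : ell X -> 0 <= cc X p.
Proof.
move=> hX; have := ell_bound p.1 p.2 hX (expr1n _ 2); rewrite mul1r /cc => h.
apply: divr_ge0; lra.
Qed.

Lemma rescale (V : lmodType R) (W : R) (A : V) (c : 'I_N * 'I_N -> R) (B : 'I_N * 'I_N -> V) :
  W^-1 *: A + \sum_p (c p / W) *: B p = W^-1 *: (A + \sum_p c p *: B p).
Proof.
rewrite scalerDr scaler_sumr; congr (_ + _); apply: eq_bigr => p _.
by rewrite scalerA mulrC.
Qed.

Lemma EF (V : lmodType R) (phi : M -> V) X : affon phi -> ell X ->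
  phi X = phi JJ + \sum_p cc X p *: (phi (rr p) - phi (qq p)).
Proof.
move=> hphi hX.
set W := 1 + \sum_p cc X p.
have W0 : 0 < W by rewrite /W ltr_pwDl // sumr_ge0 // => p _; exact: cc_ge0.
pose wt (o : option ('I_N * 'I_N)) := if o is Some p then cc X p / W else W^-1.
pose p1 (o : option ('I_N * 'I_N)) := if o is Some p then qq p else X.
pose p2 (o : option ('I_N * 'I_N)) := if o is Some p then rr p else JJ.
pose r := None :: map Some (index_enum (Datatypes_prod__canonical__fintype_Finite 'I_N 'I_N)).
have hwt : forall o, 0 <= wt o.
  case=> [p|]; rewrite /wt; [apply: divr_ge0; [exact: cc_ge0|exact: ltW] | rewrite invr_ge0; exact: ltW].
have hsum : \sum_(o <- r) wt o = 1.
  rewrite /r big_cons big_map /= -mulr_suml -{1}(mul1r W^-1) -mulrDl divff //.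
  by rewrite gt_eqF.
have hp1 : forall o, ell (p1 o) by case=> [p|] /=; [exact: ell_qq|].
have hp2 : forall o, ell (p2 o) by case=> [p|] /=; [exact: ell_rr|exact: ell_JJ].
have [_ E1] := conv_seq hphi hp1 hwt hsum.
have [_ E2] := conv_seq hphi hp2 hwt hsum.
move: E1 E2; rewrite /r !big_cons !big_map /= !rescale ident // => ->.
move/(congr1 (fun v => W *: v)); rewrite !scalerA divff ?gt_eqF // !scale1r.
move=> E; apply: (addIr (\sum_p cc X p *: phi (qq p))).
rewrite E -addrA -big_split /=; congr (_ + _); apply: eq_bigr => p _.
by rewrite -scalerDr subrK.
Qed.


Lemma aut_aff f : affine_aut f -> affon f.
Proof. by case=> _ [_ [_ h]]. Qed.

Lemma determined f g : affine_aut f -> affine_aut g ->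
  (forall A, ising A -> f A = g A) -> forall A, ell A -> f A = g A.
Proof.
move=> hf hg hfg A hA.
rewrite (EF (aut_aff hf) hA) (EF (aut_aff hg) hA) hfg; last exact: ising_JJ.
congr (_ + _); apply: eq_bigr => p _; congr (_ *: _).
have Ef : forall F, affine_aut F -> F (rr p) - F (qq p) =
   2^-1 *: (F (SK p.1) + F (SK p.2)) - 2^-1 *: (F JJ + F (SKL p.1 p.2)).
  move=> F hF; rewrite /rr /qq (half_aff (aut_aff hF) (ell_SK _) (ell_SK _)).
  by rewrite (half_aff (aut_aff hF) ell_JJ (ell_SKL _ _)).
rewrite !Ef // (hfg _ (ising_SK p.1)) (hfg _ (ising_SK p.2)) (hfg _ ising_JJ) (hfg _ (ising_SKL _ _)) //.
Qed.

Definition dist (Y B : M) : R := \sum_k \sum_l `|Y k l - B k l|.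

Lemma dist_ge0 Y B : 0 <= dist Y B.
Proof. by apply: sumr_ge0 => k _; apply: sumr_ge0. Qed.

Lemma term_le_sum (I : finType) (F : I -> R) i : (forall j, 0 <= F j) -> F i <= \sum_j F j.
Proof. by move=> h; rewrite (bigD1 i) //= lerDl sumr_ge0. Qed.

Lemma term_le_dist (Y B : M) k l : `|Y k l - B k l| <= dist Y B.
Proof.
apply: le_trans (@term_le_sum _ (fun k => \sum_l `|Y k l - B k l|) k _); last first.
  by move=> k'; apply: sumr_ge0.
by apply: (@term_le_sum _ (fun l => `|Y k l - B k l|)).
Qed.

Lemma lipschitz f B : affon f -> ell B ->
  exists K, 0 < K /\ forall Y, ell Y -> dist (f Y) (f B) <= K * dist Y B.
Proof.
move=> hf hB.
pose D p := f (rr p) - f (qq p).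
pose K0 := \sum_m \sum_n \sum_p `|D p m n|.
have K00 : 0 <= K0 by do 3!(apply: sumr_ge0 => ? _).
exists (K0 + 1); split; first lra.
move=> Y hY.
have E : f Y - f B = \sum_p (cc Y p - cc B p) *: D p.
  rewrite (EF hf hY) (EF hf hB) opprD addrACA subrr add0r -sumrB.
  by apply: eq_bigr => p _; rewrite scalerBl.
have H1 : forall m n, `|f Y m n - f B m n| <= dist Y B * \sum_p `|D p m n|.
  move=> m n; rewrite -mxBE E summxE mulr_sumr.
  apply: le_trans (ler_norm_sum _ _ _) _; apply: ler_sum => p _.
  rewrite mxZE normrM ler_wpM2r //.
  rewrite /cc -mulrBl normrM; apply: le_trans (term_le_dist Y B p.1 p.2).
  have -> : 1 - Y p.1 p.2 - (1 - B p.1 p.2) = - (Y p.1 p.2 - B p.1 p.2) by ring.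
  rewrite normrN; apply: ler_piMr => //; rewrite ger0_norm ?invr_ge0 //; lra.
apply: le_trans (_ : dist Y B * K0 <= _); last first.
  by rewrite mulrC ler_wpM2r ?dist_ge0 // lerDl.
rewrite /dist /K0 mulr_sumr; apply: ler_sum => m _; rewrite mulr_sumr; apply: ler_sum => n _.
exact: H1.
Qed.


Definition vtx (B : M) := exists (psi : M -> R^o) (c : R),
  0 < c /\ affon psi /\ psi B = 0 /\ forall Y, ell Y -> dist Y B <= - (c * psi Y).

Lemma pm_abs (s y : R) : s = 1 \/ s = -1 -> s * y <= 1 -> `|y - s| = 1 - s * y.
Proof.
case=> -> h.
  rewrite mul1r in h *; rewrite ler0_norm; lra.
rewrite mulN1r in h *; rewrite !opprK ger0_norm; lra.
Qed.

Lemma pm_mul (a b : R) : a = 1 \/ a = -1 -> b = 1 \/ b = -1 -> a * b = 1 \/ a * b = -1.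
Proof. by case=> ->; case=> ->; rewrite ?mulr1 ?mulrN1 ?mulN1r ?opprK; auto. Qed.

Lemma ising_vtx B : ising B -> vtx B.
Proof.
move=> [s [hs ->]].
have E : forall k l, (s *m s^T) k l = s k 0 * s l 0 by move=> k l; rewrite !mxE big_ord1 mxE.
exists (fun Y => \sum_k \sum_l (s k 0 * s l 0 * Y k l - 1)), 1; split; first lra.
split; [|split].
- move=> A B' t hA hB' t0 t1 /=.
  rewrite /GRing.scale /= !mulr_sumr -big_split; apply: eq_bigr => k _ /=.
  rewrite !mulr_sumr -big_split; apply: eq_bigr => l _ /=.
  rewrite mxDE !mxZE; ring.
- apply: big1 => k _; apply: big1 => l _; rewrite E.
  case: (hs k) => ->; case: (hs l) => ->; rewrite ?mulr1 ?mulrN1 ?mulN1r ?opprK ?mulr1; ring.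
- move=> Y hY; rewrite mul1r -sumrN; apply: ler_sum => k _; rewrite -sumrN; apply: ler_sum => l _.
  rewrite E pm_abs ?opprB //; first exact: pm_mul.
  apply: ell_bound => //; case: (pm_mul (hs k) (hs l)) => ->; by rewrite ?sqrrN expr1n.
Qed.

Lemma transfer f B : affine_aut f -> ell B -> vtx B -> vtx (f B).
Proof.
move=> hf hB [psi [c [c0 [hpsi [hpB hb]]]]].
have [fell [finj [fsurj faff]]] := hf.
pose finv Z := epsilon (inhabits (0 : M)) (fun A => ell A /\ f A = Z).
have finvP : forall Z, ell Z -> ell (finv Z) /\ f (finv Z) = Z.
  move=> Z hZ; apply: (epsilon_spec (inhabits (0 : M)) (fun A => ell A /\ f A = Z)); have [A hA fA] := fsurj Z hZ; by exists A.
have [K [K0 hK]] := lipschitz faff hB.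
exists (fun Z => psi (finv Z)), (K * c); split; first exact: mulr_gt0.
split; [|split].
- move=> Z1 Z2 t h1 h2 t0 t1.
  have [e1 f1] := finvP _ h1; have [e2 f2] := finvP _ h2.
  have hc : ell (t *: Z1 + (1 - t) *: Z2) by apply: ell_conv.
  have [e3 f3] := finvP _ hc.
  have -> : finv (t *: Z1 + (1 - t) *: Z2) = t *: finv Z1 + (1 - t) *: finv Z2.
    apply: finj => //; first exact: ell_conv.
    by rewrite f3 faff // f1 f2.
  exact: hpsi.
- have [e1 f1] := finvP _ (fell _ hB).
  by rewrite (finj _ _ e1 hB f1).
- move=> Z hZ; have [e1 f1] := finvP _ hZ.
  rewrite -{1}f1; apply: le_trans (hK _ e1) _.
  rewrite -mulrA -mulrN ler_wpM2l //; [exact: ltW | exact: hb].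
Qed.


Lemma sq1 (x : R) : x ^+ 2 = 1 -> x = 1 \/ x = -1.
Proof. by move/eqP; rewrite sqrf_eq1 => /orP[/eqP|/eqP]; auto. Qed.

Lemma ell_sq_le1 B k l : ell B -> B k l ^+ 2 <= 1.
Proof.
move=> hB; have h1 := ell_bound k l hB (expr1n _ 2).
have e : (-1 : R) ^+ 2 = 1 by rewrite sqrrN expr1n.
have h3 := ell_bound k l hB e; rewrite mul1r in h1; rewrite mulN1r in h3.
rewrite expr2; nra.
Qed.

Lemma tri B k0 l m : ell B -> B k0 l ^+ 2 = 1 -> B k0 m ^+ 2 = 1 -> B l m ^+ 2 = 1 ->
  B l m = B k0 l * B k0 m.
Proof.
move=> hB ha hc hb; have [_ [hpsd hd]] := hB.
have := hpsd (ev k0 - B k0 l *: ev l - B k0 m *: ev m).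
rewrite -/(bil B _ _) !(bilDl, bilDr, bilNl, bilNr, bilZl, bilZr) !bil_ev !hd.
rewrite (ell_sym hB l k0) (ell_sym hB m k0) (ell_sym hB m l).
case: (sq1 ha) => ->; case: (sq1 hc) => ->; case: (sq1 hb) => ->; lra.
Qed.

Lemma nonising B : ell B -> ~ ising B -> exists i j, i != j /\ B i j ^+ 2 < 1.
Proof.
move=> hB hnot; apply: NNPP => H; apply: hnot.
have [_ [_ hd]] := hB.
have hsq : forall i j, B i j ^+ 2 = 1.
  move=> i j; case: (eqVneq i j) => [->|hij]; first by rewrite hd expr1n.
  apply/eqP; rewrite eq_le ell_sq_le1 //=; rewrite leNgt; apply/negP => hlt.
  by apply: H; exists i, j.
case: (posnP N) => [hN0|hN].
  exists 0; split; first by move=> [i hi]; move: hi; rewrite hN0.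
  by apply/matrixP => -[i hi]; exfalso; move: hi; rewrite hN0.
pose k0 := Ordinal hN.
exists (\col_k B k0 k); split; first by move=> i; rewrite mxE; apply: sq1.
apply/matrixP => l m; rewrite !mxE big_ord1 !mxE.
case: (eqVneq l m) => [<-|hlm].
  by rewrite hd -expr2 hsq.
exact: tri.
Qed.


Lemma sum_delta' (F : 'I_N -> R) m : \sum_k (m == k)%:R * F k = F m.
Proof. by rewrite -(sum_delta F m); apply: eq_bigr => k _; rewrite eq_sym. Qed.

Definition dv (i j : 'I_N) (x y : R) (a : 'I_N) : R := x * (a == i)%:R + y * (a == j)%:R.

Lemma sum_dv i j x y (F : 'I_N -> R) : \sum_a dv i j x y a * F a = x * F i + y * F j.
Proof.
rewrite -(sum_delta F i) -(sum_delta F j) !mulr_sumr -big_split; apply: eq_bigr => a _.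
rewrite /dv /=; ring.
Qed.

Definition Mc i j x y : M := \matrix_(k, a) ((k == a)%:R + (k == i)%:R * dv i j x y a).
Definition Yc (B : M) i j x y : M := Mc i j x y *m B *m (Mc i j x y)^T.

Lemma Yc_entry B i j x y k l :
  Yc B i j x y k l = B k l + (k == i)%:R * (x * B i l + y * B j l)
    + (l == i)%:R * (x * B k i + y * B k j)
    + (k == i)%:R * (l == i)%:R * (x * (x * B i i + y * B j i) + y * (x * B i j + y * B j j)).
Proof.
have r1 : forall b, (Mc i j x y *m B) k b = B k b + (k == i)%:R * (x * B i b + y * B j b).
  move=> b; rewrite mxE.
  have -> : \sum_a Mc i j x y k a * B a b =
     \sum_a (k == a)%:R * B a b + (k == i)%:R * \sum_a dv i j x y a * B a b.
    rewrite mulr_sumr -big_split; apply: eq_bigr => a _; rewrite mxE /=; ring.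
  by rewrite sum_delta' sum_dv.
rewrite /Yc mxE.
have -> : \sum_b (Mc i j x y *m B) k b * (Mc i j x y)^T b l =
   \sum_b (l == b)%:R * (B k b + (k == i)%:R * (x * B i b + y * B j b)) +
   (l == i)%:R * \sum_b dv i j x y b * (B k b + (k == i)%:R * (x * B i b + y * B j b)).
  rewrite mulr_sumr -big_split; apply: eq_bigr => b _; rewrite r1 !mxE /=; ring.
rewrite sum_delta' sum_dv; ring.
Qed.


Lemma Yc_ell B i j x y : ell B ->
  2 * x + 2 * y * B i j + (x * x + 2 * x * y * B i j + y * y) = 0 -> ell (Yc B i j x y).
Proof.
move=> hB hc; have [hs [hpsd hd]] := hB; split; [|split].
- by rewrite /Yc !trmx_mul trmxK hs mulmxA.
- move=> v; rewrite /Yc.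
  have -> : v^T *m (Mc i j x y *m B *m (Mc i j x y)^T) *m v =
      ((Mc i j x y)^T *m v)^T *m B *m ((Mc i j x y)^T *m v).
    by rewrite trmx_mul trmxK !mulmxA.
  exact: hpsd.
- move=> k; rewrite Yc_entry hd.
  case: (eqVneq k i) => [->|hki] /=; last by rewrite !mul0r !addr0.
  rewrite !mul1r hd (ell_sym hB j i) hd; lra.
Qed.


Lemma nonising_not_vtx B : ell B -> ~ ising B -> ~ vtx B.
Proof.
move=> hB hni [psi [c [c0 [hpsi [hpB hb]]]]].
have [i [j [hij hr]]] := nonising hB hni.
have [hs [_ hd]] := hB.
pose d p := psi (rr p) - psi (qq p).
have hE : forall Y, ell Y -> - psi Y = \sum_p (Y p.1 p.2 - B p.1 p.2) * (d p / 4).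
  move=> Y hY.
  have e1 := EF hpsi hY; have e2 := EF hpsi hB.
  have -> : - psi Y = - psi Y + psi B by rewrite hpB addr0.
  rewrite e1 e2 opprD addrACA addNr add0r -sumrN -big_split.
  by apply: eq_bigr => p _ /=; rewrite /cc /GRing.scale /= /d; field.
pose U k l := (k == i)%:R * B i l + (l == i)%:R * B k i.
pose V k l := (k == i)%:R * B j l + (l == i)%:R * B k j.
pose E k l := (k == i)%:R * (l == i)%:R : R.
apply: (@final_real _ (B i j) c (\sum_p U p.1 p.2 * (d p / 4)) (\sum_p V p.1 p.2 * (d p / 4))
   (\sum_p E p.1 p.2 * (d p / 4)) hr c0).
move=> x y cond.
have hY := Yc_ell hB cond.
set Y := Yc B i j x y in hY *.
set h := x * x + 2 * x * y * B i j + y * y.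
have eY : forall k l, Y k l - B k l = x * U k l + y * V k l + h * E k l.
  move=> k l; rewrite /Y Yc_entry !hd (ell_sym hB j i) /U /V /E /h; ring.
have := hb Y hY; rewrite -mulrN (hE Y hY).
have -> : \sum_p (Y p.1 p.2 - B p.1 p.2) * (d p / 4) =
   x * \sum_p U p.1 p.2 * (d p / 4) + y * \sum_p V p.1 p.2 * (d p / 4) + h * \sum_p E p.1 p.2 * (d p / 4).
  rewrite !mulr_sumr -!big_split; apply: eq_bigr => p _ /=; rewrite eY; ring.
apply: le_trans.
have := term_le_dist Y B i j; rewrite eY /U /V /E eqxx (eq_sym j i) (negbTE hij) hd.
by rewrite /= hd !mul1r !mul0r !mulr0 !addr0 mulr1.
Qed.


Lemma ising_map (f : M -> M) (A : M) : affine_aut f -> ising A -> ising (f A).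
Proof.
move=> hf hA; apply: NNPP => hn.
have hA' := ising_ell hA.
have [fell _] := hf.
exact: (nonising_not_vtx (fell _ hA') hn (transfer hf hA' (ising_vtx hA))).
Qed.

Definition IM (b : {ffun 'I_N -> bool}) : M := Mv (fun m => if b m then 1 else -1).

Lemma ising_IM b : ising (IM b).
Proof. by apply: ising_Mv => m; case: (b m); auto. Qed.

Lemma ising_code (A : M) : ising A -> exists b, A = IM b.
Proof.
move=> [s [hs ->]]; exists [ffun m => s m 0 == 1].
apply/matrixP => k l; rewrite !mxE big_ord1 mxE !ffunE.
have e : forall m, (if s m 0 == 1 then 1 else -1) = s m 0.
  move=> m; case: (hs m) => ->; rewrite ?eqxx // ifF //.
  apply/negbTE/eqP => h; have : (-1 : R) < 1 by lra.
  by rewrite h ltxx.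
by rewrite !e.
Qed.

End Ell.

Theorem lemma9 (R : realType) (N : nat) :
  (exists (n : nat) (gs : 'I_n -> ('M[R]_N -> 'M[R]_N)),
     forall f, affine_aut f ->
       exists i : 'I_n, forall A, elliptope A -> f A = gs i A)
  /\
  (forall f g : 'M[R]_N -> 'M[R]_N, affine_aut f -> affine_aut g ->
     (forall A, ising A -> f A = g A) ->
     forall A, elliptope A -> f A = g A).
Proof.
split; last exact: determined.
pose T := {ffun {ffun 'I_N -> bool} -> {ffun 'I_N -> bool}}.
exists #|T|.
exists (fun i : 'I_#|T| => epsilon (inhabits (fun A : 'M[R]_N => A))
   (fun g => affine_aut g /\ forall b, g (@IM R N b) = @IM R N ((enum_val i : T) b))).
move=> f hf.
have E : forall b, exists b', f (@IM R N b) == @IM R N b'.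
  move=> b; have [b' hb'] := ising_code (ising_map hf (@ising_IM R N b)).
  by exists b'; apply/eqP.
pose h : T := [ffun b => xchoose (E b)].
exists (enum_rank h).
set g := epsilon _ _.
have [hg hgb] : affine_aut g /\ forall b, g (@IM R N b) = @IM R N (enum_val (enum_rank h) b).
  apply: (epsilon_spec (inhabits (fun A : 'M[R]_N => A))
   (fun g => affine_aut g /\ forall b, g (@IM R N b) = @IM R N (enum_val (enum_rank h) b))).
  exists f; split => // b; rewrite enum_rankK ffunE.
  exact/eqP/(xchooseP (E b)).
apply: determined => // A hA.
have [b ->] := ising_code hA.
by rewrite hgb enum_rankK ffunE; apply/eqP/(xchooseP (E b)).
Qed.
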